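(* Assume the standing setting and let $\epsilon>0$. If $|u^0_i-u^0_{i+1}|\le \epsilon/3^{M}$ for all $i\in\mathbb Z$, then for all $j\in\mathbb Z$ and all integers $0\le n\le N$, $$|w^{n+1}_j-w^n_j|\le \frac{\epsilon}{3^{N-n}},\qquad |w^n_j-w^n_{j+1}|\le \frac{\epsilon}{3^{N-n}} .$$
   Context: Standing setting. Let $F:\mathbb R\to\mathbb R$ be continuously differentiable. For a spatial step $\eta>0$, a time step $\tau>0$ and an initial sequence $(z^0_i)_{i\in\mathbb Z}$ of reals, the EFC (Euler forward in time, centered in space) scheme produces $(z^n_i)_{i\in\mathbb Z,\,n\in\mathbb N}$ by $z^{n+1}_i=z^n_i-F'(z^n_i)\frac{\tau}{2\eta}\,(z^n_{i+1}-z^n_{i-1})$. It satisfies the CFL condition if $|F'(z^n_i)|\,\tau/\eta\le 1$ for all $i\in\mathbb Z$, $n\in\mathbb N$. Fix $a\in\mathbb R$, $h>0$, $\Delta t>0$, an integer $N>1$ and an even integer $r\ge 2$; put $k=h/r$, $dt=\Delta t/r$, $M=Nr$. Let $u_0:\mathbb R\to\mathbb R$. The coarse solution $(w^n_j)$ is the EFC scheme with $\eta=h$, $\tau=\Delta t$, $w^0_j=u_0(a+jh)$; the fine solution $(u^n_i)$ is the EFC scheme with $\eta=k$, $\tau=dt$, $u^0_i=u_0(a+ik)$ (so $w^0_j=u^0_{jr}$). Both are assumed to satisfy the CFL condition. *)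

(* Defs.v *)
From Stdlib Require Import Reals ZArith Arith.
Open Scope R_scope.

(* EFC scheme: Euler forward in time, centered in space.
   dF plays the role of F'; eta = spatial step, tau = time step,
   z0 = initial sequence indexed by Z.  efc dF eta tau z0 n i = z^n_i. *)
Fixpoint efc (dF : R -> R) (eta tau : R) (z0 : Z -> R) (n : nat) : Z -> R :=
  match n with
  | O => z0
  | S m => fun i =>
      let z := efc dF eta tau z0 m in
      z i - dF (z i) * (tau / (2 * eta)) * (z (i + 1)%Z - z (i - 1)%Z)
  end.

Definition CFL (dF : R -> R) (eta tau : R) (z0 : Z -> R) : Prop :=
  forall (n : nat) (i : Z),
    Rabs (dF (efc dF eta tau z0 n i)) * tau / eta <= 1.

(* Main.v *)
Require Import Defs.
From Stdlib Require Import Reals ZArith Arith Lra Lia Psatz.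
Open Scope R_scope.

Lemma efc_S dF eta tau z0 n i :
  efc dF eta tau z0 (S n) i =
  efc dF eta tau z0 n i - dF (efc dF eta tau z0 n i) * (tau / (2 * eta)) *
   (efc dF eta tau z0 n (i + 1)%Z - efc dF eta tau z0 n (i - 1)%Z).
Proof. reflexivity. Qed.

Lemma step_bound dF h Dt z0 (B : R) n j :
  0 < h -> 0 < Dt -> CFL dF h Dt z0 ->
  (forall j, Rabs (efc dF h Dt z0 n j - efc dF h Dt z0 n (j+1)%Z) <= B) ->
  Rabs (efc dF h Dt z0 (S n) j - efc dF h Dt z0 n j) <= B.
Proof.
  intros Hh HDt HC HB.
  rewrite efc_S.
  set (w := efc dF h Dt z0 n).
  assert (Hc := HC n j). fold w in Hc.
  assert (H1 := HB j). assert (H2 := HB (j-1)%Z).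
  replace (j - 1 + 1)%Z with j in H2 by lia. fold w in H1, H2.
  replace (w j - dF (w j) * (Dt / (2 * h)) * (w (j + 1)%Z - w (j - 1)%Z) - w j)
    with (- ((Rabs (dF (w j)) * Dt / h) * / 2 * (Rabs (dF (w j)) / dF (w j) * 0 + 1) * 0)
          - dF (w j) * (Dt / (2 * h)) * (w (j + 1)%Z - w (j - 1)%Z)) by ring.
  rewrite Rmult_0_r, Ropp_0, Rminus_0_l, Rabs_Ropp.
  rewrite !Rabs_mult.
  rewrite (Rabs_right (Dt / (2*h))).
  2:{ apply Rle_ge; unfold Rdiv; apply Rmult_le_pos; [lra|]. left; apply Rinv_0_lt_compat; lra. }
  assert (Hd : Rabs (w (j + 1)%Z - w (j - 1)%Z) <= 2 * B).
  { replace (w (j + 1)%Z - w (j - 1)%Z) with ((w (j+1)%Z - w j) + (w j - w (j-1)%Z)) by ring.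
    eapply Rle_trans; [apply Rabs_triang|].
    rewrite <- Rabs_Ropp. replace (- (w (j + 1)%Z - w j)) with (w j - w (j+1)%Z) by ring.
    rewrite <- (Rabs_Ropp (w j - w (j-1)%Z)).
    replace (- (w j - w (j-1)%Z)) with (w (j-1)%Z - w j) by ring. lra. }
  assert (HB0 : 0 <= B) by (eapply Rle_trans; [apply Rabs_pos| apply (HB j)]).
  set (c := Rabs (dF (w j))) in *.
  assert (Hc0 : 0 <= c) by apply Rabs_pos.
  replace (c * (Dt / (2 * h)) * Rabs (w (j + 1)%Z - w (j - 1)%Z))
    with ((c * Dt / h) * (Rabs (w (j + 1)%Z - w (j - 1)%Z) / 2)) by (field; lra).
  assert (0 <= c * Dt / h).
  { unfold Rdiv; apply Rmult_le_pos; [apply Rmult_le_pos; lra|]. left; apply Rinv_0_lt_compat; lra. }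
  assert (0 <= Rabs (w (j + 1)%Z - w (j - 1)%Z)) by apply Rabs_pos.
  nra.
Qed.

Lemma tri3 x y z b : Rabs x <= b -> Rabs y <= b -> Rabs z <= b ->
  Rabs (x + y + - z) <= 3 * b.
Proof.
  intros. assert (T1 := Rabs_triang (x + y) (- z)). assert (T2 := Rabs_triang x y).
  rewrite Rabs_Ropp in T1. lra.
Qed.

Lemma pow3_ge k : INR (k + 1) <= 3 ^ k.
Proof.
  induction k. simpl. lra.
  rewrite plus_INR in *. rewrite S_INR. simpl. simpl in IHk.
  assert (0 <= INR k) by apply pos_INR. lra.
Qed.

Theorem corollary1
  (F dF : R -> R)
  (HF : forall x, derivable_pt_lim F x (dF x))
  (HdF : forall x, continuity_pt dF x)
  (a h Dt : R) (N r : nat) (u0 : R -> R) (eps : R)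
  (Hh : 0 < h) (HDt : 0 < Dt) (HN : (1 < N)%nat)
  (Hr2 : (2 <= r)%nat) (Hreven : Nat.Even r)
  (HCFLw : CFL dF h Dt (fun j => u0 (a + IZR j * h)))
  (HCFLu : CFL dF (h / INR r) (Dt / INR r) (fun i => u0 (a + IZR i * (h / INR r))))
  (Heps : 0 < eps)
  (Hu : forall i : Z,
      Rabs (u0 (a + IZR i * (h / INR r)) - u0 (a + IZR (i + 1) * (h / INR r)))
        <= eps / 3 ^ (N * r)) :
  forall (j : Z) (n : nat), (n <= N)%nat ->
    let w := efc dF h Dt (fun j => u0 (a + IZR j * h)) in
    Rabs (w (S n) j - w n j) <= eps / 3 ^ (N - n) /\
    Rabs (w n j - w n (j + 1)%Z) <= eps / 3 ^ (N - n).
Proof.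
  intros j n Hn w.
  set (e := eps / 3 ^ (N * r)).
  assert (He : 0 <= e).
  { unfold e, Rdiv. apply Rmult_le_pos; [lra|]. left; apply Rinv_0_lt_compat, pow_lt; lra. }
  assert (Hr0 : 0 < INR r) by (apply lt_0_INR; lia).
  set (k := h / INR r) in *.
  assert (Htel : forall (i : Z) (m : nat),
    Rabs (u0 (a + IZR i * k) - u0 (a + IZR (i + Z.of_nat m) * k)) <= INR m * e).
  { intros i m. induction m.
    - simpl. rewrite Z.add_0_r. unfold Rminus. rewrite Rplus_opp_r, Rabs_R0. lra.
    - rewrite S_INR.
      replace (u0 (a + IZR i * k) - u0 (a + IZR (i + Z.of_nat (S m)) * k))
        with ((u0 (a + IZR i * k) - u0 (a + IZR (i + Z.of_nat m) * k)) +
              (u0 (a + IZR (i + Z.of_nat m) * k) - u0 (a + IZR (i + Z.of_nat m + 1) * k))).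
      2:{ replace (i + Z.of_nat m + 1)%Z with (i + Z.of_nat (S m))%Z by lia. ring. }
      eapply Rle_trans; [apply Rabs_triang|].
      pose proof (Hu (i + Z.of_nat m)%Z). fold k e in H. lra. }
  set (B := INR r * e).
  assert (H0 : forall j, Rabs (w 0%nat j - w 0%nat (j+1)%Z) <= B).
  { intro i. simpl. pose proof (Htel (i * Z.of_nat r)%Z r) as Ht.
    replace (IZR (i * Z.of_nat r) * k) with (IZR i * h) in Ht.
    2:{ unfold k. rewrite mult_IZR, <- INR_IZR_INZ. field. lra. }
    replace (IZR (i * Z.of_nat r + Z.of_nat r) * k) with (IZR (i + 1) * h) in Ht.
    2:{ unfold k. replace (i * Z.of_nat r + Z.of_nat r)%Z with ((i+1) * Z.of_nat r)%Z by ring.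
        rewrite mult_IZR, <- INR_IZR_INZ. field. lra. }
    exact Ht. }
  assert (Hind : forall m j, Rabs (w m j - w m (j+1)%Z) <= B * 3 ^ m).
  { intro m. induction m; intro i.
    - simpl. rewrite Rmult_1_r. apply H0.
    - assert (S1 := step_bound dF h Dt _ (B * 3 ^ m) m i Hh HDt HCFLw IHm).
      assert (S2 := step_bound dF h Dt _ (B * 3 ^ m) m (i+1)%Z Hh HDt HCFLw IHm).
      fold w in S1, S2. pose proof (IHm i).
      replace (w (S m) i - w (S m) (i + 1)%Z) with
        ((w (S m) i - w m i) + (w m i - w m (i+1)%Z) - (w (S m) (i+1)%Z - w m (i+1)%Z)) by ring.
      replace (B * 3 ^ (S m)) with (3 * (B * 3 ^ m)) by (simpl; ring).
      set (x := w (S m) i - w m i). set (y := w m i - w m (i + 1)%Z).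
      set (z := w (S m) (i + 1)%Z - w m (i + 1)%Z).
      assert (T1 := Rabs_triang (x + y) (- z)). assert (T2 := Rabs_triang x y).
      rewrite Rabs_Ropp in T1. unfold Rminus. apply tri3; assumption. }
  assert (Hfin : B * 3 ^ n <= eps / 3 ^ (N - n)).
  { unfold B, e.
    assert (Hp1 : 0 < 3 ^ (N - n)) by (apply pow_lt; lra).
    assert (Hp2 : 0 < 3 ^ (N * r)) by (apply pow_lt; lra).
    assert (Hpn : 0 < 3 ^ n) by (apply pow_lt; lra).
    assert (Hr : INR r <= 3 ^ (N * r - N)).
    { replace r with ((r - 1) + 1)%nat at 1 by lia.
      eapply Rle_trans; [apply pow3_ge|]. apply Rle_pow; [lra|]. nia. }
    assert (E1 : 3 ^ (N * r) = 3 ^ n * 3 ^ (N - n) * 3 ^ (N * r - N)).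
    { rewrite <- !pow_add. f_equal. nia. }
    rewrite E1.
    apply (Rmult_le_reg_r (3 ^ (N - n))); [lra|].
    unfold Rdiv. field_simplify; try lra.
    assert (0 < 3 ^ (N * r - N)) by (apply pow_lt; lra).
    apply (Rmult_le_reg_r (3 ^ (N * r - N))); [lra|].
    field_simplify; try lra. nra. }
  split.
  - eapply Rle_trans; [|exact Hfin]. apply step_bound; auto.
  - eapply Rle_trans; [|exact Hfin]. apply Hind.
Qed.
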